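(* Let $A,B,D>0$ be constants, let $\lambda\in\mathbb{R}$, and let $f:(0,\infty)\to\mathbb{R}$ be defined by $$f(X)=A(2DX)^{-1/2}-B(2DX)^{-3/2}.$$ Let $\alpha>0$, $\beta>0$, and let $g:(0,\infty)\to(-\infty,0]$ be given by $g(X)=-\beta X^{\alpha}$. Let $V_\lambda:(0,\infty)\to\mathbb{R}$ be a potential satisfying $-V_\lambda'(X)=\lambda-f(X)+g(X)$ for all $X>0$ (i.e. $V_\lambda$ is an antiderivative of $-(\lambda-f+g)$, determined up to an additive constant). Then $V_\lambda$ is confining, that is, $$\lim_{X\to0^+}V_\lambda(X)=\lim_{X\to\infty}V_\lambda(X)=+\infty,$$ and for every $\xi>0$, $$\int_0^\infty e^{-\xi V_\lambda(X)}\,dX<\infty.$$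
   Context: This potential governs the stochastic droplet growth model $\dot X=\lambda-f(X)+g(X)+\sigma(X)\dot W_t$, where $X=r^2/(2D)$ is the scaled squared droplet radius, $f$ is the Köhler curve, $g$ a sink term, and $W_t$ a Brownian motion. *)

(* Defs.v *)
From Stdlib Require Import Reals.
From Coquelicot Require Import Coquelicot.
Open Scope R_scope.

Definition kohler (A B D X : R) : R :=
  A * Rpower (2 * D * X) (-(1/2)) - B * Rpower (2 * D * X) (-(3/2)).

Definition sink (alpha beta X : R) : R := - beta * Rpower X alpha.

(* Main.v *)
From Stdlib Require Import Reals Lra Classical.
From Coquelicot Require Import Coquelicot.
Open Scope R_scope.
Require Import Defs.

Lemma at_right0_lt (a0 : R) : 0 < a0 -> at_right 0 (fun a => 0 < a < a0).
Proof.
  intros H. exists (mkposreal a0 H). intros y Hy Hp. simpl in *.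
  unfold ball in Hy; simpl in Hy; unfold AbsRing_ball, abs, minus, plus, opp in Hy; simpl in Hy.
  rewrite Ropp_0, Rplus_0_r, Rabs_pos_eq in Hy by lra. lra.
Qed.

Lemma gen_pos (f : R -> R) :
 (forall x, 0 < x -> 0 <= f x) ->
 (forall a b, 0 < a -> a <= b -> ex_RInt f a b) ->
 (exists Bd, forall a b, 0 < a -> a <= b -> RInt f a b <= Bd) ->
 ex_RInt_gen f (at_right 0) (Rbar_locally p_infty).
Proof.
  intros Hpos Hex [Bd HB].
  set (E := fun y => exists a b, 0 < a <= b /\ y = RInt f a b).
  destruct (completeness E) as [L [HL1 HL2]].
  { exists Bd. intros y [a [b [Hab ->]]]. apply HB; lra. }
  { exists (RInt f 1 1). exists 1, 1. split; [lra|reflexivity]. }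
  exists L. intros P [eps HP].
  assert (Hx : exists a0 b0, 0 < a0 <= b0 /\ L - eps < RInt f a0 b0).
  { apply NNPP. intros Hn. assert (L <= L - eps).
    { apply HL2. intros y [a [b [Hab ->]]].
      destruct (Rle_or_lt (RInt f a b) (L - eps)) as [h|h]; auto.
      exfalso; apply Hn; exists a, b; auto. }
    destruct eps; simpl in *; lra. }
  destruct Hx as [a0 [b0 [Hab0 Hlt]]].
  apply Filter_prod with (fun a => 0 < a < a0) (fun b => b0 < b).
  - apply at_right0_lt; lra.
  - exists b0. auto.
  - intros a b Ha Hb. simpl. exists (RInt f a b). split.
    + exact (@RInt_correct R_CompleteNormedModule f a b (Hex a b ltac:(lra) ltac:(lra))).
    + apply HP.
      assert (E1 : ex_RInt f a a0) by (apply Hex; lra).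
      assert (E2 : ex_RInt f a0 b0) by (apply Hex; lra).
      assert (E3 : ex_RInt f b0 b) by (apply Hex; lra).
      assert (Hc : RInt f a b = RInt f a a0 + RInt f a0 b0 + RInt f b0 b).
      { rewrite <- (RInt_Chasles f a b0 b); auto.
        rewrite <- (RInt_Chasles f a a0 b0); auto.
        apply ex_RInt_Chasles with a0; auto. }
      assert (0 <= RInt f a a0) by (apply RInt_ge_0; auto; [lra| intros; apply Hpos; lra]).
      assert (0 <= RInt f b0 b) by (apply RInt_ge_0; auto; [lra| intros; apply Hpos; lra]).
      assert (RInt f a b <= L) by (apply HL1; exists a, b; split; auto; lra).
      unfold ball; simpl; unfold AbsRing_ball, abs, minus, plus, opp; simpl.
      apply Rabs_lt_between'. lra.
Qed.

Definition W (lam A B c alpha beta X : R) :=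
  (-lam*X + 2*A/sqrt c * sqrt X + 2*B/(c*sqrt c) / sqrt X) + beta/(alpha+1) * Rpower X (alpha+1).

Lemma W_deriv lam A B c alpha beta X : 0 < X -> 0 < c -> 0 < alpha ->
  is_derive (W lam A B c alpha beta) X
   (-lam + A/(sqrt c * sqrt X) - B/(c*X*(sqrt c*sqrt X)) + beta*Rpower X alpha).
Proof.
  intros HX Hc Ha.
  assert (Hs : 0 < sqrt X) by (apply sqrt_lt_R0; auto).
  assert (Hsc : 0 < sqrt c) by (apply sqrt_lt_R0; auto).
  assert (HsX : sqrt X * sqrt X = X) by (apply sqrt_sqrt; lra).
  assert (Hsc2 : sqrt c * sqrt c = c) by (apply sqrt_sqrt; lra).
  unfold W.
  replace (-lam + A/(sqrt c * sqrt X) - B/(c*X*(sqrt c*sqrt X)) + beta*Rpower X alpha)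
   with ((-lam + A/(sqrt c * sqrt X) - B/(c*X*(sqrt c*sqrt X))) + beta/(alpha+1) * ((alpha+1) * Rpower X (alpha + 1 - 1))).
  2:{ replace (alpha + 1 - 1) with alpha by ring. field. lra. }
  apply (is_derive_plus (fun X => -lam*X + 2*A/sqrt c * sqrt X + 2*B/(c*sqrt c) / sqrt X)
         (fun X => beta/(alpha+1) * Rpower X (alpha+1))).
  - auto_derive.
    + repeat split; lra.
    + rewrite HsX. field. repeat split; lra.
  - apply (is_derive_scal (fun X => Rpower X (alpha+1))).
    apply is_derive_Reals. apply derivable_pt_lim_power. auto.
Qed.

Lemma kohler_eq A B D X : 0 < X -> 0 < D ->
  kohler A B D X = A/(sqrt (2*D) * sqrt X) - B/(2*D*X*(sqrt (2*D)*sqrt X)).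
Proof.
  intros HX HD. unfold kohler.
  assert (Hy : 0 < 2*D*X) by (apply Rmult_lt_0_compat; lra).
  rewrite !Rpower_Ropp.
  replace (1/2) with (/2) by field.
  replace (3/2) with (1 + /2) by field.
  rewrite Rpower_plus, Rpower_1, Rpower_sqrt by auto.
  rewrite sqrt_mult by lra.
  assert (0 < sqrt X) by (apply sqrt_lt_R0; auto).
  assert (0 < sqrt (2*D)) by (apply sqrt_lt_R0; lra).
  field. repeat split; lra.
Qed.

Lemma exp_le' x y : x <= y -> exp x <= exp y.
Proof. intros [H|H]; [left; apply exp_increasing; auto| rewrite H; lra]. Qed.

Theorem proposition2 (A B D lam alpha beta : R) (V : R -> R)
  (hA : 0 < A) (hB : 0 < B) (hD : 0 < D)
  (halpha : 0 < alpha) (hbeta : 0 < beta)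
  (hV : forall X : R, 0 < X ->
        is_derive V X (- (lam - kohler A B D X + sink alpha beta X))) :
  filterlim V (at_right 0) (Rbar_locally p_infty) /\
  filterlim V (Rbar_locally p_infty) (Rbar_locally p_infty) /\
  (forall xi : R, 0 < xi ->
     ex_RInt_gen (fun X => exp (- xi * V X)) (at_right 0) (Rbar_locally p_infty)).
Proof.
  set (c := 2 * D).
  assert (hc : 0 < c) by (unfold c; lra).
  set (Wf := W lam A B c alpha beta).
  assert (Hd : forall X, 0 < X -> is_derive (fun t => V t - Wf t) X 0).
  { intros X HX.
    replace 0 with (- (lam - kohler A B D X + sink alpha beta X) -
       (-lam + A/(sqrt c * sqrt X) - B/(c*X*(sqrt c*sqrt X)) + beta*Rpower X alpha)).
    - apply (is_derive_minus V Wf); auto. apply W_deriv; auto.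
    - rewrite kohler_eq by auto. unfold sink, c. ring. }
  set (C := V 1 - Wf 1).
  assert (HC : forall X, 0 < X -> V X = Wf X + C).
  { intros X HX. unfold C.
    destruct (Rtotal_order X 1) as [H|[H|H]].
    - assert (E := eq_is_derive (fun t => V t - Wf t) X 1).
      simpl in E. assert (V X - Wf X = V 1 - Wf 1) by (apply E; auto; intros; apply Hd; lra).
      lra.
    - subst; ring.
    - assert (E := eq_is_derive (fun t => V t - Wf t) 1 X).
      simpl in E. assert (V 1 - Wf 1 = V X - Wf X) by (apply E; auto; intros; apply Hd; lra).
      lra. }
  set (k := 2*B/(c*sqrt c)).
  assert (Hsc : 0 < sqrt c) by (apply sqrt_lt_R0; auto).
  assert (hk : 0 < k).
  { unfold k. apply Rdiv_lt_0_compat; [lra|]. apply Rmult_lt_0_compat; auto. }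
  assert (Hl1 : lam <= Rabs lam) by apply Rle_abs.
  assert (Hl2 : - lam <= Rabs lam) by (rewrite <- Rabs_Ropp; apply Rle_abs).
  set (q := beta / (alpha + 1)).
  assert (hq : 0 < q) by (unfold q; apply Rdiv_lt_0_compat; lra).
  assert (Wsplit : forall X, 0 < X -> Wf X =
     -lam*X + 2*A/sqrt c * sqrt X + k / sqrt X + q * (X * Rpower X alpha)).
  { intros X HX. unfold Wf, W, k, q. rewrite Rpower_plus, Rpower_1 by auto. ring. }
  assert (Hlow0 : forall X, 0 < X <= 1 -> - Rabs lam + k / sqrt X <= Wf X).
  { intros X HX. rewrite Wsplit by lra.
    assert (0 <= 2*A/sqrt c * sqrt X).
    { apply Rmult_le_pos; [|apply sqrt_pos]. left; apply Rdiv_lt_0_compat; lra. }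
    assert (0 < Rpower X alpha) by (unfold Rpower; apply exp_pos).
    assert (0 <= q * (X * Rpower X alpha)).
    { apply Rmult_le_pos; [lra|]. apply Rmult_le_pos; lra. }
    nra. }
  set (T := (Rabs lam + 1) / q).
  assert (hT : 0 < T) by (unfold T; apply Rdiv_lt_0_compat; [pose proof (Rabs_pos lam)|]; lra).
  set (M := Rmax 1 (Rpower T (/alpha))).
  assert (HM1 : 1 <= M) by apply Rmax_l.
  assert (HM2 : Rpower T (/alpha) <= M) by apply Rmax_r.
  set (K0 := (Rabs lam + 1) * M).
  assert (hK0 : 0 <= K0) by (unfold K0; pose proof (Rabs_pos lam); nra).
  assert (Hlow : forall X, 0 < X -> X - K0 <= Wf X).
  { intros X HX. rewrite Wsplit by lra.
    assert (0 <= 2*A/sqrt c * sqrt X).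
    { apply Rmult_le_pos; [|apply sqrt_pos]. left; apply Rdiv_lt_0_compat; lra. }
    assert (0 < / sqrt X) by (apply Rinv_0_lt_compat, sqrt_lt_R0; auto).
    assert (0 <= k / sqrt X) by (unfold Rdiv; nra).
    assert (0 < Rpower X alpha) by (unfold Rpower; apply exp_pos).
    destruct (Rle_or_lt M X) as [HXM|HXM].
    - assert (T <= Rpower X alpha).
      { replace T with (Rpower (Rpower T (/alpha)) alpha).
        - apply Rle_Rpower_l; [lra|]. split; [unfold Rpower; apply exp_pos| lra].
        - rewrite Rpower_mult, Rinv_l, Rpower_1; auto; lra. }
      assert (q * T = Rabs lam + 1) by (unfold T; field; lra).
      assert (Rabs lam + 1 <= q * Rpower X alpha) by nra.
      assert (X * (Rabs lam + 1) <= X * (q * Rpower X alpha)) by nra.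
      nra.
    - assert (0 <= q * (X * Rpower X alpha)).
      { apply Rmult_le_pos; [lra|]. apply Rmult_le_pos; lra. }
      unfold K0. pose proof (Rabs_pos lam). nra. }
  split; [|split].
  -
    intros P [M0 HP].
    set (N := M0 + Rabs lam - C).
    set (k' := k / (Rabs N + 1)).
    assert (hN : 0 < Rabs N + 1) by (pose proof (Rabs_pos N); lra).
    assert (hk' : 0 < k') by (unfold k'; apply Rdiv_lt_0_compat; lra).
    set (delta := Rmin 1 (k' * k')).
    assert (hdelta : 0 < delta) by (unfold delta; apply Rmin_pos; nra).
    change (at_right 0 (fun x => P (V x))).
    apply filter_imp with (fun a => 0 < a < delta); [|apply at_right0_lt; auto].
    intros y Hy. apply HP.
    assert (Hy1 : y <= 1) by (pose proof (Rmin_l 1 (k'*k')); unfold delta in Hy; lra).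
    assert (Hy2 : y < k' * k') by (pose proof (Rmin_r 1 (k'*k')); unfold delta in Hy; lra).
    assert (Hsy : sqrt y < k').
    { rewrite <- (sqrt_square k') by lra. apply sqrt_lt_1_alt. lra. }
    assert (Hsy0 : 0 < sqrt y) by (apply sqrt_lt_R0; lra).
    assert (E1 : k / sqrt y * sqrt y = k) by (field; lra).
    assert (E2 : k' * (Rabs N + 1) = k) by (unfold k'; field; lra).
    assert (N <= Rabs N) by apply Rle_abs.
    assert (Rabs N + 1 < k / sqrt y) by nra.
    rewrite HC by lra. pose proof (Hlow0 y ltac:(lra)). unfold N in *. lra.
  - intros P [M0 HP]. exists (Rmax 1 (M0 + K0 - C)). intros x Hx.
    pose proof (Rmax_l 1 (M0 + K0 - C)). pose proof (Rmax_r 1 (M0 + K0 - C)).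
    apply HP. rewrite HC by lra. pose proof (Hlow x ltac:(lra)). lra.
  - intros xi Hxi.
    assert (Hex : forall a b, 0 < a -> a <= b -> ex_RInt (fun X => exp (- xi * V X)) a b).
    { intros a b Ha Hab. apply (@ex_RInt_continuous R_CompleteNormedModule). intros z Hz.
      rewrite Rmin_left, Rmax_right in Hz by auto.
      apply (@ex_derive_continuous R_AbsRing R_NormedModule). auto_derive. exists (- (lam - kohler A B D z + sink alpha beta z)). apply hV; lra. }
    apply gen_pos; auto.
    + intros; left; apply exp_pos.
    + set (K := exp (xi * (K0 - C))).
      assert (hK : 0 < K) by apply exp_pos.
      exists (K / xi). intros a b Ha Hab.
      apply Rle_trans with (RInt (fun x => K * exp (- xi * x)) a b).
      * apply RInt_le; auto.
        -- apply (@ex_RInt_continuous R_CompleteNormedModule). intros z Hz. apply (@ex_derive_continuous R_AbsRing R_NormedModule). auto_derive. auto.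
        -- intros x Hx. unfold K. rewrite <- exp_plus. apply exp_le'.
           rewrite HC by lra. pose proof (Hlow x ltac:(lra)). nra.
      * rewrite (is_RInt_unique _ a b (minus ((fun x => - K / xi * exp (- xi * x)) b) ((fun x => - K / xi * exp (- xi * x)) a))).
        -- unfold minus, plus, opp; simpl.
           assert (0 < exp (- xi * b)) by apply exp_pos.
           assert (exp (- xi * a) <= 1) by (rewrite <- exp_0; apply exp_le'; nra).
           assert (0 < K / xi) by (apply Rdiv_lt_0_compat; lra).
           replace (- K / xi * exp (- xi * b) + - (- K / xi * exp (- xi * a)))
             with (K / xi * (exp (- xi * a) - exp (- xi * b))) by (field; lra).
           nra.
        -- apply (@is_RInt_derive R_CompleteNormedModule (fun x => - K / xi * exp (- xi * x))). 
           ++ intros x _. auto_derive; auto. field. lra.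
           ++ intros x _. apply (@ex_derive_continuous R_AbsRing R_NormedModule). auto_derive. auto.
Qed.
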